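(* Let $k$ be a positive integer, $G$ a graph and $e$ an edge of $G$. Then $\gamma_{P,k}(G)-1\le \gamma_{P,k}(G/e)\le \gamma_{P,k}(G)+1$. Moreover, if $\gamma_{P,k}(G/e)=\gamma_{P,k}(G)-1$ then $\mathrm{rad}_{P,k}(G)\le \mathrm{rad}_{P,k}(G/e)$, and if $\gamma_{P,k}(G/e)=\gamma_{P,k}(G)+1$ then $\mathrm{rad}_{P,k}(G/e)\le \mathrm{rad}_{P,k}(G)$.
   Context: All graphs are finite and simple. For an edge $e=xy$, the contraction $G/e$ is obtained from $G-e$ by replacing $x$ and $y$ by a new vertex $v_{xy}$ adjacent to all vertices of $N_{G-e}(x)\cup N_{G-e}(y)$ (other than $x,y$). $N_G[v]$ is the closed neighbourhood of $v$, and $N_G[S]$ the union of closed neighbourhoods of vertices of $S$. For $S\subseteq V(G)$, define $\mathcal{P}^{0}_{G,k}(S)=N_G[S]$ and $\mathcal{P}^{i+1}_{G,k}(S)=\bigcup\{N_G[v] : v\in \mathcal{P}^{i}_{G,k}(S),\ |N_G[v]\setminus \mathcal{P}^{i}_{G,k}(S)|\le k\}$; these increase and stabilize to $\mathcal{P}^{\infty}_{G,k}(S)$. $S$ is a $k$-power dominating set ($k$-PDS) if $\mathcal{P}^{\infty}_{G,k}(S)=V(G)$; $\gamma_{P,k}(G)$ is the minimum size of a $k$-PDS. For a $k$-PDS $S$, $\mathrm{rad}_{P,k}(G,S)=1+\min\{i:\mathcal{P}^{i}_{G,k}(S)=V(G)\}$, and $\mathrm{rad}_{P,k}(G)$ is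 the minimum of $\mathrm{rad}_{P,k}(G,S)$ over all $k$-PDS $S$ of $G$ with $|S|=\gamma_{P,k}(G)$. *)

(* Defs.v *)
From mathcomp Require Import all_boot.
From mathcomp Require Import boolp.

Set Implicit Arguments.
Unset Strict Implicit.
Unset Printing Implicit Defensive.

(* A finite simple graph is a symmetric irreflexive relation g on a finType T. *)

Section PowerDomination.
Variables (T : finType) (g : rel T) (k : nat).

Definition Nclosed (v : T) : {set T} := [set u | (u == v) || g v u].
Definition NS (S : {set T}) : {set T} := \bigcup_(v in S) Nclosed v.
Definition pstep (P : {set T}) : {set T} :=
  \bigcup_(v in P | #|Nclosed v :\: P| <= k) Nclosed v.
Definition Ppow (S : {set T}) (i : nat) : {set T} := iter i pstep (NS S).
Definition isPDS (S : {set T}) : Prop := exists i, Ppow S i = setT.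
End PowerDomination.

(* minimum of a (classical) set of naturals; 0 if empty (never used here) *)
Lemma minnat_ex (p : nat -> Prop) :
  (exists n, p n) -> exists n, (fun m => `[< p m >]) n.
Proof. by case=> n pn; exists n; apply/asboolP. Qed.

Definition minnat (p : nat -> Prop) : nat :=
  match pselect (exists n, p n) with
  | left H => ex_minn (minnat_ex H)
  | right _ => 0
  end.

Definition gammaPk (T : finType) (g : rel T) (k : nat) : nat :=
  minnat (fun n => exists S : {set T}, isPDS g k S /\ #|S| = n).

Definition radPkS (T : finType) (g : rel T) (k : nat) (S : {set T}) : nat :=
  (minnat (fun i => Ppow g k S i = setT)).+1.

Definition radPk (T : finType) (g : rel T) (k : nat) : nat :=
  minnat (fun r => exists S : {set T},
    [/\ isPDS g k S, #|S| = gammaPk g k & radPkS g k S = r]).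

(* Contraction G/e for e = xy: the vertex set is V(G) \ {y}, and the vertex
   x plays the role of the new vertex v_xy. *)
Definition contract (T : finType) (g : rel T) (x y : T)
  : rel {v : T | v != y} :=
  fun u w => (val u != val w) &&
    [|| g (val u) (val w), (val u == x) && g y (val w)
      | (val w == x) && g y (val u)].
Arguments contract {T} g x y.

(* Main.v *)
Require Import Defs.
From mathcomp Require Import all_boot.
From mathcomp Require Import boolp.

Set Implicit Arguments.
Unset Strict Implicit.
Unset Printing Implicit Defensive.

Lemma minnatP (p : nat -> Prop) : (exists n, p n) ->
  p (minnat p) /\ (forall m, p m -> minnat p <= m).
Proof.
move=> H; rewrite /minnat; case: pselect => [H'|//].
case: ex_minnP => m /asboolP pm hmin; split => // n pn; apply: hmin; exact/asboolP.
Qed.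

Section General.
Variables (T : finType) (g : rel T) (k : nat).

Lemma in_N v u : (u \in Nclosed g v) = (u == v) || g v u.
Proof. by rewrite inE. Qed.

Lemma N_self v : v \in Nclosed g v.
Proof. by rewrite in_N eqxx. Qed.

Lemma psteP (P : {set T}) u : reflect (exists2 v, (v \in P) && (#|Nclosed g v :\: P| <= k) & u \in Nclosed g v) (u \in pstep g k P).
Proof. exact: bigcupP. Qed.

Lemma pstep_mono (P Q : {set T}) : P \subset Q -> pstep g k P \subset pstep g k Q.
Proof.
move=> PQ; apply/subsetP => u /psteP [v /andP [vP c] uN]; apply/psteP; exists v => //.
rewrite (subsetP PQ) //=; apply: leq_trans c; apply: subset_leq_card; exact: setDS.
Qed.

Lemma Ppow_incr S i : Ppow g k S i \subset Ppow g k S i.+1.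
Proof.
elim: i => [|i IH]; last by exact: pstep_mono.
rewrite /Ppow /=.
apply/subsetP => u /bigcupP [v vS uN]; apply/psteP; exists v => //.
have sub : Nclosed g v \subset NS g S by apply/subsetP => z zN; apply/bigcupP; exists v.
rewrite (subsetP sub) ?N_self //=.
by move: sub; rewrite -setD_eq0 => /eqP ->; rewrite cards0.
Qed.

Lemma Ppow_mono S i j : i <= j -> Ppow g k S i \subset Ppow g k S j.
Proof.
move=> ij; rewrite -(subnK ij); elim: (j - i) => [|d IH] //.
rewrite addSn; exact: subset_trans IH (Ppow_incr _ _).
Qed.

Lemma NS_Ppow S i : NS g S \subset Ppow g k S i.
Proof. exact: (Ppow_mono S (leq0n i)). Qed.

Lemma Ppow0 i : Ppow g k set0 i = set0.
Proof.
elim: i => [|i IH].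
  by apply/setP => u; rewrite inE; apply/bigcupP => -[v]; rewrite inE.
rewrite /Ppow iterS -/(Ppow g k set0 i) IH.
by apply/setP => u; rewrite inE; apply/psteP => -[v]; rewrite inE.
Qed.

Lemma gammaP : (exists S, isPDS g k S /\ #|S| = gammaPk g k) /\
  forall S, isPDS g k S -> gammaPk g k <= #|S|.
Proof.
have [] := minnatP (p := fun n => exists S, isPDS g k S /\ #|S| = n).
  exists #|[set: T]|, setT; split => //; exists 0; apply/setP => u.
  by rewrite inE; apply/bigcupP; exists u => //; exact: N_self.
move=> h1 h2; split => // S PS; apply: h2; by exists S.
Qed.

Lemma radSP S : isPDS g k S -> Ppow g k S (radPkS g k S).-1 = setT /\
  forall i, Ppow g k S i = setT -> radPkS g k S <= i.+1.
Proof.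
move=> PS; have [h1 h2] := minnatP PS; split => // i hi; exact: h2.
Qed.

Lemma radP : (exists S, [/\ isPDS g k S, #|S| = gammaPk g k & radPkS g k S = radPk g k]) /\
  forall S, isPDS g k S -> #|S| = gammaPk g k -> radPk g k <= radPkS g k S.
Proof.
have [] := minnatP (p := fun r => exists S : {set T},
    [/\ isPDS g k S, #|S| = gammaPk g k & radPkS g k S = r]).
  have [[S [PS cS]] _] := gammaP; by exists (radPkS g k S), S.
move=> h1 h2; split => // S PS cS; apply: h2; by exists S.
Qed.
End General.

Set Implicit Arguments.
Unset Strict Implicit.
Unset Printing Implicit Defensive.

Section Contr.
Variables (T : finType) (g : rel T) (gsym : symmetric g) (girr : irreflexive g)
  (k : nat) (x y : T) (exy : g x y).

Lemma hxy : x != y.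
Proof. by apply/eqP => e; move: exy; rewrite e girr. Qed.

Local Notation T' := {v : T | v != y}.
Local Notation g' := (contract g x y).
Definition xs : T' := exist _ x hxy.
Definition phi (u : T) : T' := insubd xs u.

Lemma phi_val (a : T') : phi (val a) = a.
Proof. exact: valKd. Qed.
Lemma val_phi u : u != y -> val (phi u) = u.
Proof. by move=> uy; rewrite /phi /insubd insubT. Qed.
Lemma phi_y : phi y = xs.
Proof. by rewrite /phi /insubd insubF // eqxx. Qed.
Lemma phi_x : phi x = xs.
Proof. by apply: val_inj; rewrite val_phi // hxy. Qed.
Lemma phixy z : (z == x) || (z == y) -> phi z = xs.
Proof. by case/orP => /eqP ->; [exact: phi_x|exact: phi_y]. Qed.

Lemma phi_N w u : u \in Nclosed g w -> phi u \in Nclosed g' (phi w).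
Proof.
rewrite !in_N => /orP [/eqP -> | gwu]; first by rewrite eqxx.
have uw : u != w by apply: contraTneq gwu => ->; rewrite girr.
have [wxy|wxy] := boolP ((w == x) || (w == y));
have [uxy|uxy] := boolP ((u == x) || (u == y)).
- by rewrite !phixy // eqxx.
- rewrite (phixy wxy); apply/orP; right.
  move: uxy; rewrite negb_or => /andP [ux uy].
  rewrite /contract /= val_phi // eq_sym ux eqxx /= (negbTE ux) orbF.
  by case/orP: wxy => /eqP wE; subst w; rewrite gwu ?orbT.
- rewrite (phixy uxy); apply/orP; right.
  move: wxy; rewrite negb_or => /andP [wx wy].
  rewrite /contract /= val_phi // wx eqxx /= (negbTE wx) /=.
  case/orP: uxy => /eqP uE; subst u; first by rewrite gwu.
  by rewrite (gsym y) gwu orbT.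
- apply/orP; right.
  move: wxy uxy; rewrite !negb_or => /andP [wx wy] /andP [ux uy].
  by rewrite /contract /= !val_phi // eq_sym uw gwu.
Qed.

Lemma Ninv1 (w' : T') u : val w' != x -> u != x -> u != y ->
  phi u \in Nclosed g' w' -> u \in Nclosed g (val w').
Proof.
move=> wx ux uy; rewrite !in_N => /orP [/eqP <- | ].
  by rewrite val_phi // eqxx.
rewrite /contract /= val_phi // (negbTE wx) (negbTE ux) /= orbF.
by case/andP => _ ->; rewrite orbT.
Qed.

Lemma Ninv2 u : u != x -> u != y ->
  phi u \in Nclosed g' xs -> (u \in Nclosed g x) || (u \in Nclosed g y).
Proof.
move=> ux uy; rewrite !in_N => /orP [/eqP e | ].
  by move: ux; rewrite -(val_phi uy) e eqxx.
rewrite /contract /= val_phi // eqxx (negbTE ux) /= orbF.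
by case/andP => _ /orP [->|->]; rewrite ?orbT.
Qed.

Lemma card_val_sub (A : {set T}) (B : {set T'}) :
  A \subset val @: B -> #|A| <= #|B|.
Proof. move=> s; exact: leq_trans (subset_leq_card s) (leq_imset_card _ _). Qed.

Definition SA (S' : {set T'}) : {set T} := [set u | phi u \in S'] :|: [set x].

Lemma SA_card S' : #|SA S'| <= #|S'|.+1.
Proof.
have s : SA S' \subset (if xs \in S' then y else x) |: (val @: S').
  apply/subsetP => u; rewrite !inE => /orP [pu | /eqP ->].
    have [uy|uy] := eqVneq u y.
      by move: pu; rewrite uy phi_y => ->; rewrite eqxx.
    by rewrite -(val_phi uy) imset_f ?orbT.
  case: ifP => h; last by rewrite eqxx.
  by rewrite (_ : x = val xs) // imset_f ?orbT.
apply: leq_trans (subset_leq_card s) _; rewrite cardsU1.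
by rewrite -add1n leq_add ?leq_b1 // leq_imset_card.
Qed.

Lemma x_in_Nx : x \in Nclosed g x. Proof. exact: N_self. Qed.
Lemma y_in_Nx : y \in Nclosed g x. Proof. by rewrite in_N exy orbT. Qed.

Lemma SA_xy S' i : (x \in Ppow g k (SA S') i) && (y \in Ppow g k (SA S') i).
Proof.
have xS : x \in SA S' by rewrite !inE eqxx orbT.
have sub : Nclosed g x \subset Ppow g k (SA S') i.
  apply: subset_trans (NS_Ppow _ _ _ _); apply/subsetP => z zN; apply/bigcupP; by exists x.
by rewrite !(subsetP sub) // ?x_in_Nx ?y_in_Nx.
Qed.

Lemma count_le (P : {set T}) (P' : {set T'}) (c : T) (w' : T') :
  phi c = w' -> y \in P -> x \in P ->
  (forall u, phi u \in P' -> u \in P) ->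
  #|Nclosed g c :\: P| <= #|Nclosed g' w' :\: P'|.
Proof.
move=> pc yP xP inv; apply: card_val_sub; apply/subsetP => z; rewrite inE => /andP [zP zN].
have zy : z != y by apply: contraNneq zP => ->.
rewrite -(val_phi zy) imset_f // inE -pc phi_N // andbT.
by apply: contra zP; exact: inv.
Qed.

Lemma SA_inv S' i u : phi u \in Ppow g' k S' i -> u \in Ppow g k (SA S') i.
Proof.
elim: i u => [|i IH] u.
  move=> /bigcupP [w' wS uN].
  have [uxy|uxy] := boolP ((u == x) || (u == y)).
    apply: (subsetP (NS_Ppow _ _ _ 0)); apply/bigcupP; exists x; first by rewrite !inE eqxx orbT.
    by case/orP: uxy => /eqP ->; rewrite ?x_in_Nx ?y_in_Nx.
  move: uxy; rewrite negb_or => /andP [ux uy].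
  apply/bigcupP; have [wx|wx] := eqVneq (val w') x.
    have e : w' = xs by apply: val_inj.
    subst w'; case/orP: (Ninv2 ux uy uN) => uN2.
      by exists x; rewrite // !inE eqxx orbT.
    by exists y; rewrite // !inE phi_y wS.
  by exists (val w'); [rewrite !inE phi_val wS | exact: Ninv1].
move=> /psteP [w' /andP [wP c] uN].
have [uxy|uxy] := boolP ((u == x) || (u == y)).
  apply: (subsetP (Ppow_incr _ _ _ _)).
  by case/andP: (SA_xy S' i) => ? ?; case/orP: uxy => /eqP ->.
move: uxy; rewrite negb_or => /andP [ux uy].
have /andP [xP yP] := SA_xy S' i.
apply/psteP; have [wx|wx] := eqVneq (val w') x.
  have e : w' = xs by apply: val_inj.
  subst w'; case/orP: (Ninv2 ux uy uN) => uN2.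
    exists x => //; rewrite xP /=; apply: leq_trans c.
    by apply: count_le => //; exact: phi_x.
  exists y => //; rewrite yP /=; apply: leq_trans c.
  by apply: count_le => //; exact: phi_y.
exists (val w'); last exact: Ninv1.
rewrite IH ?phi_val //=; apply: leq_trans c.
by apply: count_le => //; exact: phi_val.
Qed.

Lemma transA S' i : Ppow g' k S' i = setT -> Ppow g k (SA S') i = setT.
Proof. by move=> e; apply/setP => u; rewrite inE; apply: SA_inv; rewrite e inE. Qed.

Definition SB (S : {set T}) : {set T'} := xs |: (phi @: S).

Lemma SB_card S : #|SB S| <= #|S|.+1.
Proof. by rewrite cardsU1 -add1n leq_add ?leq_b1 // leq_imset_card. Qed.

Lemma SB_xs S i : Nclosed g' xs \subset Ppow g' k (SB S) i.
Proof.
apply: subset_trans (NS_Ppow _ _ _ _); apply/subsetP => z zN; apply/bigcupP.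
by exists xs; rewrite // !inE eqxx.
Qed.

Lemma SB_fwd S i u : u \in Ppow g k S i -> phi u \in Ppow g' k (SB S) i.
Proof.
elim: i u => [|i IH] u.
  move=> /bigcupP [w wS uN]; apply/bigcupP; exists (phi w); last exact: phi_N.
  by rewrite !inE imset_f ?orbT.
move=> /psteP [w /andP [wP c] uN].
have [wxy|wxy] := boolP ((w == x) || (w == y)).
  apply: (subsetP (SB_xs S i.+1)); rewrite -(phixy wxy); exact: phi_N.
move: wxy; rewrite negb_or => /andP [wx wy].
apply/psteP; exists (phi w); last exact: phi_N.
rewrite IH //=; apply: leq_trans c.
apply: leq_trans (leq_imset_card phi _); apply: subset_leq_card.
apply/subsetP => z; rewrite inE => /andP [zP zN].
have zx : val z != x.
  apply: contraNneq zP => e; have -> : z = xs by apply: val_inj.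
  by apply: (subsetP (SB_xs S i)); exact: N_self.
have zy : val z != y := valP z.
rewrite -(phi_val z) imset_f // inE.
have -> : val z \in Nclosed g w.
  by rewrite -(val_phi wy); apply: Ninv1; rewrite ?val_phi // phi_val.
by rewrite andbT; apply: contra zP => /IH; rewrite phi_val.
Qed.

Lemma transB S i : Ppow g k S i = setT -> Ppow g' k (SB S) i = setT.
Proof.
move=> e; apply/setP => u; rewrite inE -(phi_val u); apply: SB_fwd; by rewrite e inE.
Qed.
End Contr.

Theorem mainTheorem4 (T : finType) (g : rel T)
  (gsym : symmetric g) (girr : irreflexive g)
  (k : nat) (kpos : 0 < k) (x y : T) (exy : g x y) :
  gammaPk g k - 1 <= gammaPk (contract g x y) k <= gammaPk g k + 1 /\
  (gammaPk (contract g x y) k = gammaPk g k - 1 ->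
     radPk g k <= radPk (contract g x y) k) /\
  (gammaPk (contract g x y) k = gammaPk g k + 1 ->
     radPk (contract g x y) k <= radPk g k).
Proof.
set g' := contract g x y.
have [[S0 [PS0 cS0]] gmin] := gammaP g k.
have [[S1 [PS1 cS1]] gmin'] := gammaP g' k.
have g1 : 0 < gammaPk g k.
  rewrite -cS0 card_gt0; apply/negP => /eqP e; case: PS0 => i.
  by rewrite e Ppow0 => h; have := in_setT x; rewrite -h inE.
have PA : forall S', isPDS g' k S' -> isPDS g k (SA girr exy S').
  by move=> S' [i e]; exists i; exact: transA.
have PB : forall S, isPDS g k S -> isPDS g' k (SB girr exy S).
  by move=> S [i e]; exists i; exact: transB.
have radA : forall S', isPDS g' k S' -> radPkS g k (SA girr exy S') <= radPkS g' k S'.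
  move=> S' P'; have [h1 _] := radSP P'; have [_ h2] := radSP (PA _ P').
  by apply: h2; apply: transA.
have radB : forall S, isPDS g k S -> radPkS g' k (SB girr exy S) <= radPkS g k S.
  move=> S P; have [h1 _] := radSP P; have [_ h2] := radSP (PB _ P).
  by apply: h2; apply: transB.
have b1 : gammaPk g k <= gammaPk g' k + 1.
  apply: leq_trans (gmin _ (PA _ PS1)) _; rewrite addn1 -cS1; exact: SA_card.
have b2 : gammaPk g' k <= gammaPk g k + 1.
  apply: leq_trans (gmin' _ (PB _ PS0)) _; rewrite addn1 -cS0; exact: SB_card.
split; first by rewrite b2 andbT leq_subLR addnC.
split.
  move=> e; have [[S2 [P2 c2 r2]] _] := radP g' k.
  have [_ rmin] := radP g k.
  rewrite -r2; apply: leq_trans (radA _ P2); apply: rmin; first exact: PA.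
  apply/eqP; rewrite eqn_leq gmin ?andbT //; last exact: PA.
  apply: leq_trans (SA_card girr exy S2) _; by rewrite c2 e subn1 prednK.
move=> e; have [[S2 [P2 c2 r2]] _] := radP g k.
have [_ rmin] := radP g' k.
rewrite -r2; apply: leq_trans (radB _ P2); apply: rmin; first exact: PB.
apply/eqP; rewrite eqn_leq gmin' ?andbT //; last exact: PB.
apply: leq_trans (SB_card girr exy S2) _; by rewrite c2 e addn1.
Qed.
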